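(* Let $d\in\mathbb{N}$, $a<b$, $\alpha\in[0,1]$, $\rho=\mathrm{diag}(\rho_1,\dots,\rho_d)\in\mathbb{R}^{d\times d}$, and let $L:\mathbb{R}^d\times\mathbb{R}^d\to\mathbb{R}$, $(z,\dot z)\mapsto L(z,\dot z)$, be a $C^2$ function that is even in its second variable, i.e. $L(z,-\dot z)=L(z,\dot z)$. Consider the equations $$\text{(a)}\quad \frac{d}{dt}\Big(\frac{\partial L}{\partial\dot x}(x,\dot x)\Big)-\frac{\partial L}{\partial x}(x,\dot x)+\rho\,D^\alpha_-D^\alpha_-x=0,$$ $$\text{(b)}\quad \frac{d}{dt}\Big(\frac{\partial L}{\partial\dot y}(y,\dot y)\Big)-\frac{\partial L}{\partial y}(y,\dot y)+\rho\,D^\alpha_+D^\alpha_+y=0,$$ for smooth curves $x,y:[a,b]\to\mathbb{R}^d$. If $x$ is a smooth curve and $y(t):=x(a+b-t)$ (so that $y(a)=x(b)$, $y(b)=x(a)$), then equation (b) for $y$ is equation (a) for $x$ in reversed time $\tilde t=a+b-t$: for every $t\in[a,b]$ the left-hand side of (b) evaluated along $y$ at time $t$ equals the left-hand side of (a) evaluated along $x$ at time $\tilde t=a+b-t$. In particular $y$ solves (b) on $[a,b]$ if and only if $x$ solves (a) on $[a,b]$.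
   Context: For $f:[a,b]\to\mathbb{R}$ (componentwise for vector-valued functions), $D^\alpha_-f(t)=\frac{1}{\Gamma(1-\alpha)}\frac{d}{dt}\int_a^t(t-\tau)^{-\alpha}f(\tau)\,d\tau$ and $D^\alpha_+f(t)=-\frac{1}{\Gamma(1-\alpha)}\frac{d}{dt}\int_t^b(\tau-t)^{-\alpha}f(\tau)\,d\tau$ (Riemann–Liouville fractional derivatives); $D^\alpha_\pm D^\alpha_\pm$ denotes the composition. These equations are the restricted fractional Euler–Lagrange equations for the Lagrangian $L(x,\dot x)+L(y,\dot y)-D^\alpha_-x\,\rho\,D^\alpha_+y$. *)

(* Defs.v *)
From HB Require Import structures.
From mathcomp Require Import all_boot all_order all_algebra.
From mathcomp Require Import all_classical all_reals all_analysis.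
Set Implicit Arguments. Unset Strict Implicit. Unset Printing Implicit Defensive.
Import Order.TTheory GRing.Theory Num.Theory.
Import numFieldNormedType.Exports.
Local Open Scope classical_set_scope.
Local Open Scope ring_scope.

Section Defs.
Variable R : realType.
Local Notation mu := (@lebesgue_measure R).

Definition Gamma (s : R) : R :=
  Rintegral mu `]0, +oo[ (fun t => t `^ (s - 1) * expR (- t)).

Definition RL_left_int (a alpha : R) (f : R -> R) (t : R) : R :=
  Rintegral mu `[a, t] (fun tau => (t - tau) `^ (- alpha) * f tau).
Definition RL_right_int (b alpha : R) (f : R -> R) (t : R) : R :=
  Rintegral mu `[t, b] (fun tau => (tau - t) `^ (- alpha) * f tau).

Definition RL_Dminus (a alpha : R) (f : R -> R) (t : R) : R :=
  (Gamma (1 - alpha))^-1 * derive1 (RL_left_int a alpha f) t.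
Definition RL_Dplus (b alpha : R) (f : R -> R) (t : R) : R :=
  - ((Gamma (1 - alpha))^-1 * derive1 (RL_right_int b alpha f) t).

Variable d : nat.

Definition Dminus (a alpha : R) (x : R -> 'cV[R]_d) (t : R) : 'cV[R]_d :=
  \col_i RL_Dminus a alpha (fun s => x s i 0) t.
Definition Dplus (b alpha : R) (x : R -> 'cV[R]_d) (t : R) : 'cV[R]_d :=
  \col_i RL_Dplus b alpha (fun s => x s i 0) t.

Definition ddt (x : R -> 'cV[R]_d) (t : R) : 'cV[R]_d :=
  \col_i derive1 (fun s => x s i 0) t.

Definition smooth_curve (x : R -> 'cV[R]_d) : Prop :=
  forall (i : 'I_d) (k : nat) (t : R),
    derivable (derive1n k (fun s => x s i 0)) t 1.

(* Lagrangian L(z, zdot); partial derivative in coordinate direction k of the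
   function on R^(d+d) obtained by stacking (z, zdot). *)
Definition Lstack (L : 'cV[R]_d -> 'cV[R]_d -> R) (w : 'cV[R]_(d + d)) : R :=
  L (usubmx w) (dsubmx w).

Definition partial n (f : 'cV[R]_n -> R) (k : 'I_n) (w : 'cV[R]_n) : R :=
  'D_(delta_mx k 0) f w.

Definition C2 n (f : 'cV[R]_n -> R) : Prop :=
  continuous f /\
  forall k : 'I_n,
    (forall w, derivable f w (delta_mx k 0)) /\ continuous (partial f k) /\
    forall l : 'I_n,
      (forall w, derivable (partial f k) w (delta_mx l 0)) /\
      continuous (partial (partial f k) l).

Definition dLdz (L : 'cV[R]_d -> 'cV[R]_d -> R) (z v : 'cV[R]_d) : 'cV[R]_d :=
  \col_i 'D_(delta_mx i 0) (fun w => L w v) z.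
Definition dLdv (L : 'cV[R]_d -> 'cV[R]_d -> R) (z v : 'cV[R]_d) : 'cV[R]_d :=
  \col_i 'D_(delta_mx i 0) (fun w => L z w) v.

Definition lhs_a (L : 'cV[R]_d -> 'cV[R]_d -> R) (rho : 'M[R]_d) (a alpha : R)
  (x : R -> 'cV[R]_d) (t : R) : 'cV[R]_d :=
  ddt (fun s => dLdv L (x s) (ddt x s)) t - dLdz L (x t) (ddt x t)
  + rho *m Dminus a alpha (Dminus a alpha x) t.

Definition lhs_b (L : 'cV[R]_d -> 'cV[R]_d -> R) (rho : 'M[R]_d) (b alpha : R)
  (y : R -> 'cV[R]_d) (t : R) : 'cV[R]_d :=
  ddt (fun s => dLdv L (y s) (ddt y s)) t - dLdz L (y t) (ddt y t)
  + rho *m Dplus b alpha (Dplus b alpha y) t.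

End Defs.

(* Main.v *)
Require Import Defs.
From HB Require Import structures.
From mathcomp Require Import all_boot all_order all_algebra.
From mathcomp Require Import all_classical all_reals all_analysis.
From mathcomp Require Import lra.
Import Order.TTheory GRing.Theory Num.Theory.
Import numFieldNormedType.Exports.
Local Open Scope ring_scope.

Section Helpers.
Set Implicit Arguments. Unset Strict Implicit.
Local Open Scope classical_set_scope.
Variable R : realType.


Lemma point0 : (point : R) = 0.
Proof. reflexivity. Qed.

Lemma dnbhs0N (A : set R) : (0 : R)^' A -> (0 : R)^' (-%R @^-1` A).
Proof.
move=> [e /= e0 H]; exists e => //= h he hn0; apply: H.
  by move: he; rewrite /ball_ /= !sub0r !normrN.
by rewrite oppr_eq0.
Qed.

Lemma cvg_compN0 (G : R -> R) (l : R) : G @ (0:R)^' --> l -> (fun h => G (- h)) @ (0:R)^' --> l.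
Proof. by move=> GL P /GL /dnbhs0N. Qed.

Lemma limN1 (G : R -> R) : lim ((fun h => G (- h)) @ (0:R)^') = lim (G @ (0:R)^').
Proof.
case: (pselect (cvg (G @ (0:R)^'))) => [cG|nG].
  by apply: cvg_lim => //; exact: cvg_compN0.
rewrite (dvgP nG) dvgP // => cG; apply: nG.
have := cvg_compN0 cG.
rewrite (_ : (fun h => G (- - h)) = G) ?funeqE => [|h]; last by rewrite opprK.
by move/cvgP.
Qed.

Lemma limN0 (G : R -> R) : lim ((fun h => - G h) @ (0:R)^') = - lim (G @ (0:R)^').
Proof.
case: (pselect (cvg (G @ (0:R)^'))) => [cG|nG].
  by apply: cvg_lim => //; exact: cvgN.
rewrite (dvgP nG) dvgP ?point0 ?oppr0 // => cG; apply: nG.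
have := cvgN cG.
have E : (- (fun h : R => - G h)) = G by apply/funext => h /=; rewrite opprK.
rewrite E => H; apply/cvgP; exact: H.
Qed.


Lemma derive1_refl (K : R -> R) (c t : R) :
  derive1 (fun s => K (c - s)) t = - derive1 K (c - t).
Proof.
rewrite /derive1 -limN0 -limN1; congr (lim (_ @ (0:R)^')); apply/funext => h /=.
rewrite invrN scaleNr; congr (- (_ *: (K _ - _))).
by rewrite opprD opprK addrCA.
Qed.

Lemma derive1_opp (K : R -> R) (t : R) :
  derive1 (fun s => - K s) t = - derive1 K t.
Proof.
rewrite /derive1 -limN0; congr (lim (_ @ (0:R)^')); apply/funext => h /=.
by rewrite -scalerN opprB opprK addrC.
Qed.

Lemma derive_even n (f : 'cV[R]_n -> R) (e v : 'cV[R]_n) :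
  (forall w, f (- w) = f w) -> 'D_e f (- v) = - 'D_e f v.
Proof.
move=> fE.
rewrite /derive -limN0 -limN1; congr (lim (_ @ (0:R)^')); apply/funext => h /=.
rewrite invrN [(- h) *: e]scaleNr -opprD !fE scaleNr.
by [].
Qed.


Local Notation mu := (@lebesgue_measure R).

Definition refl (c : R) : measurableTypeR R -> measurableTypeR R := fun x : R => c - x.

Lemma measurable_refl c : measurable_fun setT (refl c).
Proof.
have H : measurable_fun (setT : set R) (fun x : R => c - x).
  by apply: measurable_realfun.measurable_funB.
move=> mT Y mY; exact: (H mT Y mY).
Qed.

Lemma lebesgue_refl c (A : set R) : measurable A -> mu (refl c @^-1` A) = mu A.
Proof.
move=> mA.
pose nu : {measure set _ -> \bar R} := pushforward mu (refl c).
have := @lebesgue_measure_unique R (nu (measurable_refl c)) _ A mA.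
move=> H; rewrite H //.
move=> _ [[p q] _ <-] /=.
rewrite /nu /pushforward /=.
have -> : refl c @^-1` `]p, q] = `[c - q, c - p[%classic.
  apply/seteqP; split => x; rewrite /refl /= !in_itv /=.
    by move=> /andP[h1 h2]; apply/andP; split; lra.
  by move=> /andP[h1 h2]; apply/andP; split; lra.
rewrite !lebesgue_measure_itv /= !lte_fin.
have -> : (c - q < c - p) = (p < q) by apply/idP/idP => ?; lra.
by case: ifP => // _; rewrite -!EFinD; congr (_%:E); lra.
Qed.

Import HBNNSimple.
Section HR.
Variables (c : R) (h : {nnsfun (measurableTypeR R) >-> R}).
Definition hr : measurableTypeR R -> R := fun x => h (refl c x).

Let hr_meas : measurable_fun setT hr.
Proof. by apply: measurableT_comp => //; exact: measurable_refl. Qed.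
HB.instance Definition _ := isMeasurableFun.Build _ _ _ _ hr hr_meas.

Let hr_fin : finite_set (range hr).
Proof.
apply: (sub_finite_set _ (@fimfunP _ _ h)).
by move=> _ [x _ <-]; exists (refl c x).
Qed.
HB.instance Definition _ := FiniteImage.Build _ _ hr hr_fin.

Let hr_ge0 x : 0 <= hr x.
Proof. exact: fun_ge0. Qed.
HB.instance Definition _ := isNonNegFun.Build _ _ hr hr_ge0.

Lemma sintegral_hr : sintegral mu hr = sintegral mu h.
Proof.
rewrite !sintegralET; apply: eq_fsbigr => x _; congr (_ * _)%E.
apply: lebesgue_refl.
apply: (@measurable_funPTI _ _ _ _ h); exact: measurable_set1.
Qed.
End HR.

Lemma reflK c x : refl c (refl c x) = x.
Proof. by rewrite /refl subKr. Qed.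

Lemma sup_refl c (k k' : measurableTypeR R -> \bar R) :
  (forall x, k' x = k (refl c x)) ->
  ereal_sup [set sintegral mu h | h in [set h : {nnsfun measurableTypeR R >-> R} | forall x, ((h x)%:E <= k x)%E]] =
  ereal_sup [set sintegral mu h | h in [set h : {nnsfun measurableTypeR R >-> R} | forall x, ((h x)%:E <= k' x)%E]].
Proof.
move=> kk.
congr ereal_sup; apply/seteqP; split => _ [h hk <-].
  exists (hr c h : {nnsfun measurableTypeR R >-> R}); last exact: sintegral_hr.
  by move=> x; rewrite kk; exact: hk.
exists (hr c h : {nnsfun measurableTypeR R >-> R}); last exact: sintegral_hr.
by move=> x; have := hk (refl c x); rewrite kk reflK.
Qed.

Lemma integral_refl c (D : set R) (g : R -> \bar R) :
  (\int[mu]_(x in D) g x = \int[mu]_(x in refl c @^-1` D) g (refl c x))%E.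
Proof.
rewrite /integral; congr (_ - _)%E; apply: (sup_refl (c:=c)) => x;
  rewrite ?funeposE ?funenegE /=;
  (have -> // : ((fun x0 => g (refl c x0)) \_ (refl c @^-1` D)) x = ([eta g] \_ D) (refl c x));
  rewrite /patch; congr (if _ then _ else _);
  by apply/idP/idP => /set_mem H; apply: mem_set.
Qed.


Lemma RL_right_refl (a b alpha : R) (f : R -> R) (t : R) :
  RL_right_int b alpha (fun s => f (a + b - s)) t = RL_left_int a alpha f (a + b - t).
Proof.
rewrite /RL_right_int /RL_left_int /Rintegral (integral_refl (a + b)).
have -> : refl (a + b) @^-1` `[t, b] = `[a, a + b - t]%classic.
  apply/seteqP; split => u; rewrite /refl /= !in_itv /=.
    by move=> /andP[h1 h2]; apply/andP; split; lra.
  by move=> /andP[h1 h2]; apply/andP; split; lra.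
congr fine; apply: eq_integral => u _; rewrite /refl.
congr ((_ `^ _ * f _)%:E); lra.
Qed.

Lemma RL_Dplus_refl (a b alpha : R) (f : R -> R) (t : R) :
  RL_Dplus b alpha (fun s => f (a + b - s)) t = RL_Dminus a alpha f (a + b - t).
Proof.
rewrite /RL_Dplus /RL_Dminus.
have -> : RL_right_int b alpha (fun s => f (a + b - s)) =
          (fun s => RL_left_int a alpha f (a + b - s)).
  by apply/funext => s; exact: RL_right_refl.
by rewrite derive1_refl mulrN opprK.
Qed.

Variable d : nat.

Lemma Dplus_refl (a b alpha : R) (x : R -> 'cV[R]_d) :
  Dplus b alpha (fun s => x (a + b - s)) = (fun t => Dminus a alpha x (a + b - t)).
Proof.
apply/funext => t; apply/matrixP => i j; rewrite !mxE.
exact: RL_Dplus_refl.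
Qed.

Lemma ddt_refl (c : R) (x : R -> 'cV[R]_d) (t : R) :
  ddt (fun s => x (c - s)) t = - ddt x (c - t).
Proof.
apply/matrixP => i j; rewrite !mxE.
exact: derive1_refl.
Qed.

Lemma ddt_negrefl (c : R) (F : R -> 'cV[R]_d) (t : R) :
  ddt (fun s => - F (c - s)) t = ddt F (c - t).
Proof.
apply/matrixP => i j; rewrite !mxE.
have -> : (fun s => (- F (c - s)) i 0) = (fun s => - (F (c - s) i 0)).
  by apply/funext => s; rewrite mxE.
by rewrite derive1_opp (derive1_refl (fun u => F u i 0)) opprK.
Qed.

Lemma dLdv_even (L : 'cV[R]_d -> 'cV[R]_d -> R) (z v : 'cV[R]_d) :
  (forall z v, L z (- v) = L z v) -> dLdv L z (- v) = - dLdv L z v.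
Proof.
move=> Le; apply/matrixP => i j; rewrite !mxE.
by apply: derive_even => w; exact: Le.
Qed.

Lemma dLdz_even (L : 'cV[R]_d -> 'cV[R]_d -> R) (z v : 'cV[R]_d) :
  (forall z v, L z (- v) = L z v) -> dLdz L z (- v) = dLdz L z v.
Proof.
move=> Le; rewrite /dLdz.
have -> : (fun w => L w (- v)) = (fun w => L w v) by apply/funext => w; exact: Le.
by [].
Qed.

End Helpers.

Theorem proposition3p8 (R : realType) (d : nat) (a b alpha : R)
  (rho : 'M[R]_d) (L : 'cV[R]_d -> 'cV[R]_d -> R) (x : R -> 'cV[R]_d) :
  a < b -> 0 <= alpha <= 1 -> is_diag_mx rho ->
  C2 (Lstack L) -> (forall z v, L z (- v) = L z v) ->
  smooth_curve x ->
  let y := fun t => x (a + b - t) in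
  (forall t, a <= t <= b -> lhs_b L rho b alpha y t = lhs_a L rho a alpha x (a + b - t)) /\
  ((forall t, a <= t <= b -> lhs_b L rho b alpha y t = 0) <->
   (forall t, a <= t <= b -> lhs_a L rho a alpha x t = 0)).
Proof.
move=> hab hal hrho hC2 Le hx y.
have key : forall t, lhs_b L rho b alpha y t = lhs_a L rho a alpha x (a + b - t).
  move=> t; rewrite /lhs_b /lhs_a /y.
  rewrite Dplus_refl.
  rewrite Dplus_refl.
  rewrite ddt_refl.
  rewrite (dLdz_even (x (a + b - t)) (ddt x (a + b - t)) Le).
  have -> : (fun s => dLdv L (x (a + b - s)) (ddt (fun t0 => x (a + b - t0)) s)) =
            (fun s => - dLdv L (x (a + b - s)) (ddt x (a + b - s))).
    by apply/funext => s; rewrite ddt_refl (dLdv_even (x (a + b - s)) (ddt x (a + b - s)) Le).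
  rewrite (ddt_negrefl (a + b) (fun s => dLdv L (x s) (ddt x s))).
  by [].
split; first by move=> t _; exact: key.
split => H t /andP[h1 h2].
  have := H (a + b - t); rewrite key (_ : a + b - (a + b - t) = t); last by lra.
  by apply; apply/andP; split; lra.
by rewrite key; apply: H; apply/andP; split; lra.
Qed.
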